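(* For $p=2$, \[ F_0(q)= \frac14 \sum_{\mathbf n \in \mathbb{Z}^2} \left(12 n_1 n_2-3n_1^2-3n_2^2-n_1-n_2\right) q^{ 2 Q\left(\mathbf n-\left(\frac12,\frac12\right)\right) }. \]
   Context: $q:=e^{2\pi i\tau}$, $\tau\in\mathbb H$. $Q(\mathbf n):=n_1^2+n_2^2-n_1n_2$. With $p=2$, \begin{align*} F(\zeta_1,\zeta_2;q)&:=\sum_{n_1,n_2\in\mathbb Z}\frac{q^{2Q\left(n_1-\frac12,\,n_2-\frac12\right)}}{\left(1-\zeta_1^{-1}\right)\left(1-\zeta_2^{-1}\right)\left(1-\zeta_1^{-1}\zeta_2^{-1}\right)}\Big(\zeta_1^{n_1-1} \zeta_2^{n_2-1} -\zeta_1^{-n_1+n_2-1}\zeta_2^{n_2-1}\\ &\qquad-\zeta_1^{n_1-1}\zeta_2^{-n_2+n_1-1}+\zeta_1^{-n_2-1} \zeta_2^{-n_2+n_1-1}+\zeta_1^{-n_1+n_2-1} \zeta_2^{-n_1-1}-\zeta_1^{-n_2-1}\zeta_2^{-n_1-1}\Big), \end{align*} where each summand is a Laurent polynomial in $\zeta_1,\zeta_2$, and $F_0(q):=\lim_{(\zeta_1,\zeta_2)\to(1,1)}F(\zeta_1,\zeta_2;q)$. *)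

(* Defs.v *)
From Stdlib Require Import Reals ZArith.
From Coquelicot Require Import Coquelicot.
Open Scope R_scope.
Open Scope C_scope.

Definition Czpow (z : C) (k : Z) : C :=
  match k with
  | Z0 => 1
  | Zpos p => pow_n z (Pos.to_nat p)
  | Zneg p => / pow_n z (Pos.to_nat p)
  end.

(* q^x := exp(2 pi i tau x) for real x, with q = e^{2 pi i tau};
   written out as exp(Re w) (cos(Im w) + i sin(Im w)), w = 2 pi i tau x. *)
Definition qpow (tau : C) (x : R) : C :=
  let re := (- (2 * PI * Im tau * x))%R in
  let im := (2 * PI * Re tau * x)%R in
  (exp re * cos im, exp re * sin im)%R.

Definition Qf (a b : R) : R := (a ^ 2 + b ^ 2 - a * b)%R.

Definition psum2 (f : Z -> Z -> C) (N : nat) : C :=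
  sum_n (fun i => sum_n (fun j =>
     f (Z.of_nat i - Z.of_nat N)%Z (Z.of_nat j - Z.of_nat N)%Z) (2 * N)) (2 * N).

Definition is_zsum2 (f : Z -> Z -> C) (l : C) : Prop :=
  filterlim (psum2 f) eventually (locally l).

Definition zsum2 (f : Z -> Z -> C) : C :=
  (real (Lim_seq (fun N => Re (psum2 f N))), real (Lim_seq (fun N => Im (psum2 f N))))%R.

Definition F_term (tau z1 z2 : C) (n1 n2 : Z) : C :=
  qpow tau (2 * Qf (IZR n1 - /2) (IZR n2 - /2))%R *
  ((Czpow z1 (n1 - 1)%Z * Czpow z2 (n2 - 1)%Z
    - Czpow z1 (- n1 + n2 - 1)%Z * Czpow z2 (n2 - 1)%Z
    - Czpow z1 (n1 - 1)%Z * Czpow z2 (- n2 + n1 - 1)%Z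
    + Czpow z1 (- n2 - 1)%Z * Czpow z2 (- n2 + n1 - 1)%Z
    + Czpow z1 (- n1 + n2 - 1)%Z * Czpow z2 (- n1 - 1)%Z
    - Czpow z1 (- n2 - 1)%Z * Czpow z2 (- n1 - 1)%Z)
   / ((1 - / z1) * (1 - / z2) * (1 - / z1 * / z2))).

Definition F (tau z1 z2 : C) : C := zsum2 (F_term tau z1 z2).

Definition F_dom (z : C * C) : Prop :=
  fst z <> 0 /\ snd z <> 0 /\ fst z <> 1 /\ snd z <> 1 /\ fst z * snd z <> 1.

Definition RHS_term (tau : C) (n1 n2 : Z) : C :=
  RtoC (12 * IZR n1 * IZR n2 - 3 * IZR n1 ^ 2 - 3 * IZR n2 ^ 2 - IZR n1 - IZR n2)%R *
  qpow tau (2 * Qf (IZR n1 - /2) (IZR n2 - /2))%R.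

(* Main.v *)
Require Import Defs.
From Stdlib Require Import Reals ZArith.
From Coquelicot Require Import Coquelicot.
From Stdlib Require Import Lra Lia List.
Open Scope R_scope.
Open Scope C_scope.

Lemma C1_nz : (1 : C) <> 0.
Proof. intro H. apply (f_equal fst) in H. simpl in H. lra. Qed.

Lemma Cmult_nz (a b : C) : a <> 0 -> b <> 0 -> a * b <> 0.
Proof.
  intros Ha Hb H. apply Cmod_gt_0 in Ha. apply Cmod_gt_0 in Hb.
  assert (Cmod (a * b) = 0)%R by (rewrite H; apply Cmod_0).
  rewrite Cmod_mult in H0. nra.
Qed.

Lemma Cinv_nz (a : C) : a <> 0 -> / a <> 0.
Proof.
  intros Ha H. apply C1_nz. rewrite <- (Cinv_r a Ha), H. ring.
Qed.

Lemma pow_n_Cpow (z : C) (n : nat) : pow_n z n = Cpow z n.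
Proof. induction n; simpl; [reflexivity|]. rewrite IHn. reflexivity. Qed.

Lemma Cpow_nz (z : C) n : z <> 0 -> Cpow z n <> 0.
Proof.
  intros Hz. induction n; simpl.
  - exact C1_nz.
  - apply Cmult_nz; auto.
Qed.

Lemma Czpow_of_nat (z : C) n : Czpow z (Z.of_nat n) = Cpow z n.
Proof.
  destruct n; [reflexivity|]. simpl. rewrite pow_n_Cpow.
  rewrite SuccNat2Pos.id_succ. reflexivity.
Qed.

Lemma Czpow_opp_nat (z : C) n : Czpow z (- Z.of_nat n) = / Cpow z n.
Proof.
  destruct n; simpl.
  - unfold Cinv. simpl. apply injective_projections; simpl; field.
  - rewrite pow_n_Cpow. rewrite SuccNat2Pos.id_succ. reflexivity.
Qed.

Lemma Z_cases (k : Z) : exists n, k = Z.of_nat n \/ k = (- Z.of_nat n)%Z.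
Proof.
  destruct (Z_le_gt_dec 0 k).
  - exists (Z.to_nat k). left. lia.
  - exists (Z.to_nat (-k)). right. lia.
Qed.

Lemma Czpow_succ (z : C) k : z <> 0 -> Czpow z (k + 1) = Czpow z k * z.
Proof.
  intros Hz. destruct (Z_le_gt_dec 0 k).
  - replace (k+1)%Z with (Z.of_nat (S (Z.to_nat k))) by lia.
    replace k with (Z.of_nat (Z.to_nat k)) at 2 by lia.
    rewrite !Czpow_of_nat. simpl. ring.
  - replace (k+1)%Z with (- Z.of_nat (Z.to_nat (-k-1)))%Z by lia.
    replace k with (- Z.of_nat (S (Z.to_nat (-k-1))))%Z at 2 by lia.
    rewrite !Czpow_opp_nat. simpl. field. split; [apply Cpow_nz; auto| auto].
Qed.

Lemma Czpow_nz (z : C) k : z <> 0 -> Czpow z k <> 0.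
Proof.
  intros Hz. destruct (Z_cases k) as [n [-> | ->]].
  - rewrite Czpow_of_nat. apply Cpow_nz; auto.
  - rewrite Czpow_opp_nat. apply Cinv_nz, Cpow_nz; auto.
Qed.

Lemma Czpow_pred (z : C) k : z <> 0 -> Czpow z (k - 1) = Czpow z k / z.
Proof.
  intros Hz. replace k with ((k - 1) + 1)%Z at 2 by lia.
  rewrite Czpow_succ; auto. field. auto.
Qed.

Lemma Czpow_0 (z : C) : Czpow z 0 = 1.
Proof. reflexivity. Qed.

Lemma Czpow_1 (z : C) : Czpow z 1 = z.
Proof. change 1%Z with (Z.of_nat 1). rewrite Czpow_of_nat. simpl. ring. Qed.

Lemma Czpow_add (z : C) a b : z <> 0 -> Czpow z (a + b) = Czpow z a * Czpow z b.
Proof.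
  intros Hz. induction b using Z.peano_ind.
  - rewrite Z.add_0_r, Czpow_0. ring.
  - rewrite <- Z.add_1_r, Z.add_assoc, !Czpow_succ, IHb; auto. ring.
  - rewrite <- Z.sub_1_r in *. replace (a + (b - 1))%Z with ((a + b) - 1)%Z by lia.
    rewrite !Czpow_pred, IHb; auto. field. auto.
Qed.

Lemma Czpow_opp (z : C) a : z <> 0 -> Czpow z (- a) = / Czpow z a.
Proof.
  intros Hz. assert (H : Czpow z (- a) * Czpow z a = 1).
  { rewrite <- Czpow_add; auto. replace (- a + a)%Z with 0%Z by lia. reflexivity. }
  transitivity (Czpow z (-a) * Czpow z a * / Czpow z a).
  - field. apply Czpow_nz; auto.
  - rewrite H. ring.
Qed.

Lemma Czpow_sub (z : C) a b : z <> 0 -> Czpow z (a - b) = Czpow z a / Czpow z b.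
Proof.
  intros Hz. unfold Z.sub. rewrite Czpow_add, Czpow_opp; auto.
Qed.

Lemma Czpow_mul (x y : C) k : x <> 0 -> y <> 0 -> Czpow (x * y) k = Czpow x k * Czpow y k.
Proof.
  intros Hx Hy. destruct (Z_cases k) as [n [-> | ->]].
  - rewrite !Czpow_of_nat. induction n; simpl; [ring|]. rewrite IHn. ring.
  - rewrite !Czpow_opp_nat.
    assert (E : Cpow (x * y) n = Cpow x n * Cpow y n).
    { induction n; simpl; [ring|]. rewrite IHn. ring. }
    rewrite E. field. split; apply Cpow_nz; auto.
Qed.

Lemma Czpow_inv (x : C) k : x <> 0 -> Czpow (/ x) k = / Czpow x k.
Proof.
  intros Hx. destruct (Z_cases k) as [n [-> | ->]].
  - rewrite !Czpow_of_nat. rewrite Cpow_inv; auto.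
  - rewrite !Czpow_opp_nat. rewrite Cpow_inv; auto.
Qed.

Lemma Czpow_one k : Czpow 1 k = 1.
Proof.
  destruct (Z_cases k) as [n [-> | ->]].
  - rewrite Czpow_of_nat. induction n; simpl; [ring|]. rewrite IHn. ring.
  - rewrite Czpow_opp_nat. assert (E : Cpow 1 n = 1).
    { induction n; simpl; [ring|]. rewrite IHn. ring. }
    rewrite E. field.
Qed.

Definition mono := (R * Z * Z)%type.

Fixpoint up (lo : Z) (d : nat) : list Z :=
  match d with O => nil | S d' => (lo + 1)%Z :: up (lo + 1) d' end.

Definition rng (lo hi : Z) : list (R * Z) :=
  if Z.leb lo hi then map (fun j => (1%R, j)) (up lo (Z.to_nat (hi - lo)))
  else map (fun j => ((-1)%R, j)) (up hi (Z.to_nat (lo - hi))).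

Definition lsum {A : Type} (f : A -> C) (l : list A) : C :=
  fold_right (fun a acc => f a + acc) 0 l.
Definition lsumR {A : Type} (f : A -> R) (l : list A) : R :=
  fold_right (fun a acc => (f a + acc)%R) 0%R l.

Lemma lsum_app {A} (f : A -> C) l1 l2 : lsum f (l1 ++ l2) = lsum f l1 + lsum f l2.
Proof. induction l1; simpl; [ring|]. rewrite IHl1. ring. Qed.
Lemma lsumR_app {A} (f : A -> R) l1 l2 : lsumR f (l1 ++ l2) = (lsumR f l1 + lsumR f l2)%R.
Proof. induction l1; simpl; [ring|]. rewrite IHl1. ring. Qed.
Lemma lsum_map {A B} (f : B -> C) (h : A -> B) l : lsum f (map h l) = lsum (fun a => f (h a)) l.
Proof. induction l; simpl; congruence. Qed.
Lemma lsumR_map {A B} (f : B -> R) (h : A -> B) l : lsumR f (map h l) = lsumR (fun a => f (h a)) l.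
Proof. induction l; simpl; congruence. Qed.
Lemma lsum_ext {A} (f g : A -> C) l : (forall a, f a = g a) -> lsum f l = lsum g l.
Proof. intros H; induction l; simpl; congruence. Qed.
Lemma lsumR_ext {A} (f g : A -> R) l : (forall a, f a = g a) -> lsumR f l = lsumR g l.
Proof. intros H; induction l; simpl; congruence. Qed.
Lemma lsum_scal {A} (k : C) (f : A -> C) l : lsum (fun a => k * f a) l = k * lsum f l.
Proof. induction l; simpl; [ring|]. rewrite IHl. ring. Qed.
Lemma lsumR_scal {A} (k : R) (f : A -> R) l : lsumR (fun a => k * f a)%R l = (k * lsumR f l)%R.
Proof. induction l; simpl; [ring|]. rewrite IHl. ring. Qed.

Lemma up_tele (G : Z -> C) lo d :
  lsum (fun j => G j - G (j - 1)%Z) (up lo d) = G (lo + Z.of_nat d)%Z - G lo.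
Proof.
  revert lo; induction d; intros lo; simpl.
  - rewrite Z.add_0_r. ring.
  - rewrite IHd. replace (lo + 1 - 1)%Z with lo by lia.
    replace (lo + 1 + Z.of_nat d)%Z with (lo + Z.pos (Pos.of_succ_nat d))%Z by lia. ring.
Qed.

Lemma up_teleR (G : Z -> R) lo d :
  lsumR (fun j => G j - G (j - 1)%Z)%R (up lo d) = (G (lo + Z.of_nat d)%Z - G lo)%R.
Proof.
  revert lo; induction d; intros lo; simpl.
  - rewrite Z.add_0_r. ring.
  - rewrite IHd. replace (lo + 1 - 1)%Z with lo by lia.
    replace (lo + 1 + Z.of_nat d)%Z with (lo + Z.pos (Pos.of_succ_nat d))%Z by lia. ring.
Qed.

Lemma rng_tele (G g : Z -> C) lo hi :
  (forall j, g j = G j - G (j - 1)%Z) ->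
  lsum (fun sj => RtoC (fst sj) * g (snd sj)) (rng lo hi) = G hi - G lo.
Proof.
  intros Hg. unfold rng. destruct (Z.leb_spec lo hi).
  - rewrite lsum_map. simpl.
    rewrite (lsum_ext _ (fun j => G j - G (j - 1)%Z)).
    + rewrite up_tele. replace (lo + Z.of_nat (Z.to_nat (hi - lo)))%Z with hi by lia. ring.
    + intros j. rewrite Hg. ring.
  - rewrite lsum_map. simpl.
    rewrite (lsum_ext _ (fun j => -1 * (G j - G (j - 1)%Z))).
    + rewrite lsum_scal, up_tele. replace (hi + Z.of_nat (Z.to_nat (lo - hi)))%Z with lo by lia. ring.
    + intros j. rewrite Hg. simpl fst. replace (RtoC (-1)) with (- (1)) by (apply injective_projections; simpl; ring). ring.
Qed.

Lemma rng_teleR (G g : Z -> R) lo hi :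
  (forall j, g j = G j - G (j - 1)%Z)%R ->
  lsumR (fun sj => fst sj * g (snd sj))%R (rng lo hi) = (G hi - G lo)%R.
Proof.
  intros Hg. unfold rng. destruct (Z.leb_spec lo hi).
  - rewrite lsumR_map. simpl.
    rewrite (lsumR_ext _ (fun j => G j - G (j - 1)%Z)%R).
    + rewrite up_teleR. replace (lo + Z.of_nat (Z.to_nat (hi - lo)))%Z with hi by lia. ring.
    + intros j. rewrite Hg. ring.
  - rewrite lsumR_map. simpl.
    rewrite (lsumR_ext _ (fun j => -1 * (G j - G (j - 1)%Z))%R).
    + rewrite lsumR_scal, up_teleR. replace (hi + Z.of_nat (Z.to_nat (lo - hi)))%Z with lo by lia. ring.
    + intros j. rewrite Hg. ring.
Qed.

Definition mc (m : mono) : R := fst (fst m).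
Definition ma (m : mono) : Z := snd (fst m).
Definition mb (m : mono) : Z := snd m.

Definition ev (p : list mono) (x y : C) : C :=
  lsum (fun m => RtoC (mc m) * Czpow x (ma m) * Czpow y (mb m)) p.

Definition D1 (p : list mono) : list mono :=
  flat_map (fun m => map (fun sj => ((mc m * fst sj)%R, snd sj, mb m))
                         (rng (mb m - ma m - 1) (ma m))) p.
Definition D2 (p : list mono) : list mono :=
  flat_map (fun m => map (fun sj => ((mc m * fst sj)%R, ma m, snd sj))
                         (rng (ma m - mb m - 1) (mb m))) p.

Lemma ev_cons m p x y : ev (m :: p) x y = RtoC (mc m) * Czpow x (ma m) * Czpow y (mb m) + ev p x y.
Proof. reflexivity. Qed.

Lemma ev_D1 p (x y : C) : x <> 0 -> y <> 0 ->
  (1 - / x) * ev (D1 p) x y = ev p x y - / x * ev p (/ x) (x * y).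
Proof.
  intros Hx Hy. induction p as [|m p IH].
  - unfold ev; simpl. ring.
  - unfold D1. simpl flat_map. fold (D1 p). unfold ev at 1. rewrite lsum_app.
    fold (ev (D1 p) x y). rewrite ev_cons, ev_cons.
    rewrite Cmult_plus_distr_l, IH.
    rewrite lsum_map. simpl.
    rewrite (lsum_ext _ (fun sj => (RtoC (mc m) * Czpow y (mb m)) * (RtoC (fst sj) * Czpow x (snd sj)))).
    2:{ intros sj. unfold mc, ma. simpl. rewrite RtoC_mult. ring. }
    rewrite lsum_scal.
    assert (HT : (1 - / x) * lsum (fun sj => RtoC (fst sj) * Czpow x (snd sj)) (rng (mb m - ma m - 1) (ma m))
             = Czpow x (ma m) - Czpow x (mb m - ma m - 1)%Z).
    { rewrite <- lsum_scal.
      rewrite (lsum_ext _ (fun sj => RtoC (fst sj) * (Czpow x (snd sj) * (1 - / x)))).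
      2:{ intros; ring. }
      apply (rng_tele (Czpow x) (fun j => Czpow x j * (1 - / x))). intros j. rewrite Czpow_pred; auto. field. auto. }
    rewrite Cmult_assoc.
    rewrite (Cmult_comm (1 - / x)). rewrite <- Cmult_assoc. rewrite HT.
    rewrite Czpow_inv, Czpow_mul; auto.
    rewrite !Czpow_sub; auto. rewrite Czpow_1.
    field. repeat split; auto; apply Czpow_nz; auto.
Qed.

Lemma ev_D2 p (x y : C) : x <> 0 -> y <> 0 ->
  (1 - / y) * ev (D2 p) x y = ev p x y - / y * ev p (x * y) (/ y).
Proof.
  intros Hx Hy. induction p as [|m p IH].
  - unfold ev; simpl. ring.
  - unfold D2. simpl flat_map. fold (D2 p). unfold ev at 1. rewrite lsum_app.
    fold (ev (D2 p) x y). rewrite ev_cons, ev_cons.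
    rewrite Cmult_plus_distr_l, IH.
    rewrite lsum_map. simpl.
    rewrite (lsum_ext _ (fun sj => (RtoC (mc m) * Czpow x (ma m)) * (RtoC (fst sj) * Czpow y (snd sj)))).
    2:{ intros sj. unfold mc, ma, mb. simpl. rewrite RtoC_mult. ring. }
    rewrite lsum_scal.
    assert (HT : (1 - / y) * lsum (fun sj => RtoC (fst sj) * Czpow y (snd sj)) (rng (ma m - mb m - 1) (mb m))
             = Czpow y (mb m) - Czpow y (ma m - mb m - 1)%Z).
    { rewrite <- lsum_scal.
      rewrite (lsum_ext _ (fun sj => RtoC (fst sj) * (Czpow y (snd sj) * (1 - / y)))).
      2:{ intros; ring. }
      apply (rng_tele (Czpow y) (fun j => Czpow y j * (1 - / y))). intros j.
      rewrite Czpow_pred; auto. field. auto. }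
    rewrite Cmult_assoc.
    rewrite (Cmult_comm (1 - / y)). rewrite <- Cmult_assoc. rewrite HT.
    rewrite Czpow_inv, Czpow_mul; auto.
    rewrite !Czpow_sub; auto. rewrite Czpow_1.
    field. repeat split; auto; apply Czpow_nz; auto.
Qed.

Definition evw (phi : Z -> Z -> R) (p : list mono) : R :=
  lsumR (fun m => mc m * phi (ma m) (mb m))%R p.

Lemma evw_D1 (phi Phi : Z -> Z -> R) p :
  (forall j b, phi j b = Phi j b - Phi (j - 1)%Z b)%R ->
  evw phi (D1 p) = evw (fun a b => Phi a b - Phi (b - a - 1)%Z b)%R p.
Proof.
  intros H. induction p as [|m p IH]; [reflexivity|].
  unfold D1. simpl flat_map. fold (D1 p). unfold evw at 1. rewrite lsumR_app.
  fold (evw phi (D1 p)). rewrite IH. unfold evw at 2. simpl. f_equal.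
  rewrite lsumR_map. unfold mc at 1, ma at 1, mb at 1. simpl.
  rewrite (lsumR_ext _ (fun sj => mc m * (fst sj * phi (snd sj) (mb m))))%R.
  2:{ intros. ring. }
  rewrite lsumR_scal. f_equal.
  apply (rng_teleR (fun j => Phi j (mb m)) (fun j => phi j (mb m))). intros j. apply H.
Qed.

Lemma evw_D2 (phi Phi : Z -> Z -> R) p :
  (forall a j, phi a j = Phi a j - Phi a (j - 1)%Z)%R ->
  evw phi (D2 p) = evw (fun a b => Phi a b - Phi a (a - b - 1)%Z)%R p.
Proof.
  intros H. induction p as [|m p IH]; [reflexivity|].
  unfold D2. simpl flat_map. fold (D2 p). unfold evw at 1. rewrite lsumR_app.
  fold (evw phi (D2 p)). rewrite IH. unfold evw at 2. simpl. f_equal.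
  rewrite lsumR_map. unfold mc at 1, ma at 1, mb at 1. simpl.
  rewrite (lsumR_ext _ (fun sj => mc m * (fst sj * phi (ma m) (snd sj))))%R.
  2:{ intros. unfold ma at 1. simpl. ring. }
  rewrite lsumR_scal. f_equal.
  apply (rng_teleR (fun j => Phi (ma m) j) (fun j => phi (ma m) j)). intros j. apply H.
Qed.

Lemma ev_one p : ev p 1 1 = RtoC (evw (fun _ _ => 1%R) p).
Proof.
  induction p as [|m p IH]; [reflexivity|].
  rewrite ev_cons, IH. unfold evw. simpl. rewrite !Czpow_one, RtoC_plus, RtoC_mult. ring.
Qed.

Definition Tn (n1 n2 : Z) : list mono :=
  D1 (D2 (D1 (((1%R, (n1 - 1)%Z), (n2 - 1)%Z) :: nil))).

Definition Nnum (z1 z2 : C) (n1 n2 : Z) : C :=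
  (Czpow z1 (n1 - 1)%Z * Czpow z2 (n2 - 1)%Z
    - Czpow z1 (- n1 + n2 - 1)%Z * Czpow z2 (n2 - 1)%Z
    - Czpow z1 (n1 - 1)%Z * Czpow z2 (- n2 + n1 - 1)%Z
    + Czpow z1 (- n2 - 1)%Z * Czpow z2 (- n2 + n1 - 1)%Z
    + Czpow z1 (- n1 + n2 - 1)%Z * Czpow z2 (- n1 - 1)%Z
    - Czpow z1 (- n2 - 1)%Z * Czpow z2 (- n1 - 1)%Z).

Lemma solve_eq (a u b : C) : a <> 0 -> a * u = b -> u = b / a.
Proof. intros Ha H. rewrite <- H. field. auto. Qed.

Lemma one_minus_inv_nz (u : C) : u <> 0 -> u <> 1 -> 1 - / u <> 0.
Proof.
  intros H0 H1 H. apply H1.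
  assert (E : / u = 1). { rewrite <- (Cplus_0_l (/ u)), <- H. ring. }
  transitivity (u * (/ u)). rewrite E; ring. apply Cinv_r; auto.
Qed.

Lemma one_minus_nz (u : C) : u <> 1 -> 1 - u <> 0.
Proof. intros H1 H. apply H1. rewrite <- (Cplus_0_l u), <- H. ring. Qed.

Lemma ev_single c a b (u v : C) : ev (((c, a), b) :: nil) u v = RtoC c * Czpow u a * Czpow v b.
Proof. unfold ev; simpl. unfold mc, ma, mb; simpl. ring. Qed.

Lemma T_ident (x y : C) n1 n2 : x <> 0 -> y <> 0 -> x <> 1 -> y <> 1 -> x * y <> 1 ->
  ((1 - / x) * (1 - / y) * (1 - / x * / y)) * ev (Tn n1 n2) x y = Nnum x y n1 n2.
Proof.
  intros Hx Hy Hx1 Hy1 Hxy1.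
  assert (Hxy : x * y <> 0) by (apply Cmult_nz; auto).
  assert (Hix : / x <> 0) by (apply Cinv_nz; auto).
  assert (Hiy : / y <> 0) by (apply Cinv_nz; auto).
  assert (Hixy : / (x * y) <> 0) by (apply Cinv_nz; auto).
  assert (Dx : 1 - / x <> 0) by (apply one_minus_inv_nz; auto).
  assert (Dy : 1 - / y <> 0) by (apply one_minus_inv_nz; auto).
  assert (Dxy : 1 - / (x * y) <> 0) by (apply one_minus_inv_nz; auto).
  assert (D1x : 1 - x <> 0) by (apply one_minus_nz; auto).
  unfold Tn.
  set (f := (((1%R, (n1 - 1)%Z), (n2 - 1)%Z) :: nil)).
  set (h := D1 f). set (g := D2 h).
  pose proof (ev_D1 g x y Hx Hy) as R1.
  pose proof (ev_D2 h x y Hx Hy) as R2.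
  pose proof (ev_D2 h (/ x) (x * y) Hix Hxy) as R3.
  pose proof (ev_D1 f x y Hx Hy) as R4.
  pose proof (ev_D1 f (x * y) (/ y) Hxy Hiy) as R5.
  pose proof (ev_D1 f (/ x) (x * y) Hix Hxy) as R6.
  pose proof (ev_D1 f y (/ (x * y)) Hy Hixy) as R7.
  fold g in R2, R3. fold h in R4, R5, R6, R7.
  replace (/ x * (x * y)) with y in R3, R6 by (field; auto).
  replace (x * y * / y) with x in R5 by (field; auto).
  replace (/ / x) with x in R6 by (field; auto).
  replace (y * / (x * y)) with (/ x) in R7 by (field; auto).
  apply solve_eq in R1; auto. apply solve_eq in R2; auto. apply solve_eq in R3; auto.
  apply solve_eq in R4; auto. apply solve_eq in R5; auto. apply solve_eq in R6; auto.
  apply solve_eq in R7; auto.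
  rewrite R1, R2, R3. rewrite R4, R5, R6, R7.
  unfold f. rewrite !ev_single.
  rewrite !Czpow_inv by auto. rewrite !Czpow_mul by auto.
  unfold Nnum.
  rewrite !Czpow_sub by auto. rewrite !Czpow_add by auto. rewrite !Czpow_opp by auto.
  rewrite !Czpow_1.
  assert (X1 : Czpow x n1 <> 0) by (apply Czpow_nz; auto).
  assert (X2 : Czpow x n2 <> 0) by (apply Czpow_nz; auto).
  assert (Y1 : Czpow y n1 <> 0) by (apply Czpow_nz; auto).
  assert (Y2 : Czpow y n2 <> 0) by (apply Czpow_nz; auto).
  assert (E1 : x - 1 <> 0) by (intro H; apply Hx1; rewrite <- (Cplus_0_l 1), <- H; ring).
  assert (E2 : y - 1 <> 0) by (intro H; apply Hy1; rewrite <- (Cplus_0_l 1), <- H; ring).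
  assert (E3 : x * y - 1 <> 0) by (intro H; apply Hxy1; rewrite <- (Cplus_0_l 1), <- H; ring).
  field. repeat split; auto.
Qed.

Definition Phi1 (a j : Z) : R := ((2 * IZR a + 1) * IZR j - IZR j * (IZR j + 1) / 2)%R.
Definition Phi2 (j b : Z) : R :=
  (- IZR j * (IZR j + 1) * (2 * IZR j + 1) / 4 + (3 * IZR b + / 2) * (IZR j * (IZR j + 1)) / 2
   + (2 * IZR b + 1) * IZR j)%R.
Definition Lpoly (n1 n2 : Z) : R :=
  (- (IZR n1 - 2 * IZR n2) * (2 * IZR n1 - IZR n2) * (IZR n1 + IZR n2) / 2)%R.

Lemma T_one n1 n2 : ev (Tn n1 n2) 1 1 = RtoC (Lpoly n1 n2).
Proof.
  rewrite ev_one. unfold Tn. f_equal.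
  rewrite (evw_D1 (fun _ _ => 1%R) (fun j b => IZR j)).
  2:{ intros. rewrite minus_IZR. simpl. ring. }
  rewrite (evw_D2 _ Phi1).
  2:{ intros. unfold Phi1. rewrite !minus_IZR. simpl. field. }
  rewrite (evw_D1 _ Phi2).
  2:{ intros. unfold Phi1, Phi2. rewrite !minus_IZR. simpl. field. }
  unfold evw. simpl. unfold mc, ma, mb. simpl. unfold Phi2, Lpoly.
  rewrite !minus_IZR. simpl. field.
Qed.

Definition mbound (B : nat) (m : mono) : Prop :=
  Rabs (mc m) <= 1 /\ (Z.abs (ma m) <= Z.of_nat B)%Z /\ (Z.abs (mb m) <= Z.of_nat B)%Z.

Definition bounded (p : list mono) (B l : nat) : Prop :=
  (length p <= l)%nat /\ List.Forall (mbound B) p.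

Lemma up_in lo d j : In j (up lo d) -> (lo < j <= lo + Z.of_nat d)%Z.
Proof.
  revert lo; induction d; intros lo H; simpl in H; [contradiction|].
  destruct H as [<- | H]; [lia|]. apply IHd in H. lia.
Qed.

Lemma up_len lo d : length (up lo d) = d.
Proof. revert lo; induction d; intros; simpl; auto. Qed.

Lemma rng_in lo hi sj : In sj (rng lo hi) ->
  Rabs (fst sj) <= 1 /\ (Z.min lo hi < snd sj <= Z.max lo hi)%Z.
Proof.
  unfold rng. destruct (Z.leb_spec lo hi) as [Hle|Hle]; intros Hin; apply in_map_iff in Hin;
  destruct Hin as [j [<- Hj]]; apply up_in in Hj; simpl; split.
  - rewrite Rabs_R1; lra.
  - lia.
  - unfold Rabs; destruct Rcase_abs; lra.
  - lia.
Qed.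

Lemma rng_len lo hi : length (rng lo hi) = Z.to_nat (Z.abs (hi - lo)).
Proof.
  unfold rng. destruct (Z.leb_spec lo hi); rewrite length_map, up_len; lia.
Qed.

Lemma len_aux (a b c l K : nat) : (a <= K -> b <= c * K -> S c <= l -> a + b <= l * K)%nat.
Proof. nia. Qed.

Lemma D1_bounded p B l : bounded p B l -> bounded (D1 p) (2 * B + 1) (l * (3 * B + 1)).
Proof.
  intros [Hl Hf]. revert l Hl. induction p as [|m p IH]; intros l Hl.
  - split; simpl; [lia| apply List.Forall_nil].
  - inversion Hf as [|? ? Hm Hp]; subst.
    destruct (IH Hp (length p) (le_n _)) as [Hl' Hf'].
    unfold D1; simpl flat_map; fold (D1 p). destruct Hm as [Hc [Ha Hb]]. split.
    + rewrite length_app, length_map, rng_len. simpl in Hl.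
      assert (Z.to_nat (Z.abs (ma m - (mb m - ma m - 1))) <= 3 * B + 1)%nat by lia.
      eapply len_aux; [exact H | exact Hl' | exact Hl].
    + apply List.Forall_app. split; auto.
      apply List.Forall_forall. intros m' Hm'. apply in_map_iff in Hm'.
      destruct Hm' as [sj [<- Hsj]]. apply rng_in in Hsj. destruct Hsj as [Hs Hj].
      unfold mbound, mc, ma, mb in *; simpl. repeat split.
      * rewrite Rabs_mult. assert (0 <= Rabs (fst (fst m))) by apply Rabs_pos. nra.
      * lia.
      * lia.
Qed.

Lemma D2_bounded p B l : bounded p B l -> bounded (D2 p) (2 * B + 1) (l * (3 * B + 1)).
Proof.
  intros [Hl Hf]. revert l Hl. induction p as [|m p IH]; intros l Hl.
  - split; simpl; [lia| apply List.Forall_nil].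
  - inversion Hf as [|? ? Hm Hp]; subst.
    destruct (IH Hp (length p) (le_n _)) as [Hl' Hf'].
    unfold D2; simpl flat_map; fold (D2 p). destruct Hm as [Hc [Ha Hb]]. split.
    + rewrite length_app, length_map, rng_len. simpl in Hl.
      assert (Z.to_nat (Z.abs (mb m - (ma m - mb m - 1))) <= 3 * B + 1)%nat by lia.
      eapply len_aux; [exact H | exact Hl' | exact Hl].
    + apply List.Forall_app. split; auto.
      apply List.Forall_forall. intros m' Hm'. apply in_map_iff in Hm'.
      destruct Hm' as [sj [<- Hsj]]. apply rng_in in Hsj. destruct Hsj as [Hs Hj].
      unfold mbound, mc, ma, mb in *; simpl. repeat split.
      * rewrite Rabs_mult. assert (0 <= Rabs (fst (fst m))) by apply Rabs_pos. nra.
      * lia.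
      * lia.
Qed.

Lemma Cpow_bound (w : C) (eta : R) n : Cmod w <= 3 -> Cmod (w - 1) <= eta ->
  Cmod (Cpow w n) <= 3 ^ n /\ Cmod (Cpow w n - 1) <= INR n * eta * 3 ^ n.
Proof.
  intros Hw He. assert (He0 : 0 <= eta) by (pose proof (Cmod_ge_0 (w - 1)); lra).
  induction n as [|n [IH1 IH2]].
  - simpl. split. rewrite Cmod_1; lra. replace (1 - 1) with (RtoC 0) by ring. rewrite Cmod_0. lra.
  - assert (H3 : ((1 <= 3 ^ n)%R)) by (apply pow_R1_Rle; lra).
    change (Cpow w (S n)) with (w * Cpow w n). change (3 ^ S n)%R with (3 * 3 ^ n)%R.
    split.
    + rewrite Cmod_mult. apply Rmult_le_compat; auto using Cmod_ge_0.
    + replace (w * Cpow w n - 1) with (w * (Cpow w n - 1) + (w - 1)) by ring.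
      eapply Rle_trans; [apply Cmod_triangle|]. rewrite Cmod_mult.
      assert (Cmod w * Cmod (Cpow w n - 1) <= 3 * (INR n * eta * 3 ^ n)).
      { apply Rmult_le_compat; auto using Cmod_ge_0. }
      rewrite S_INR. assert (0 <= INR n) by apply pos_INR.
      assert (eta <= 3 * eta * 3 ^ n)%R by nra.
      replace ((INR n + 1) * eta * (3 * 3 ^ n))%R with (3 * (INR n * eta * 3 ^ n) + 3 * eta * 3 ^ n)%R by ring.
      lra.
Qed.

Lemma Czpow_bound (x : C) (d : R) k : Cmod (x - 1) <= d -> d <= / 2 ->
  Cmod (Czpow x k) <= 3 ^ (Z.abs_nat k) /\
  Cmod (Czpow x k - 1) <= INR (Z.abs_nat k) * (2 * d) * 3 ^ (Z.abs_nat k).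
Proof.
  intros Hd Hd2.
  assert (Hd0 : 0 <= d) by (pose proof (Cmod_ge_0 (x - 1)); lra).
  assert (Hx1 : Cmod x <= 1 + d).
  { replace x with ((x - 1) + 1) by ring. eapply Rle_trans; [apply Cmod_triangle|].
    rewrite Cmod_1. replace (x - 1 + 1 - 1) with (x - 1) by ring. lra. }
  assert (Hx2 : / 2 <= Cmod x).
  { assert (Cmod 1 <= Cmod (1 - x) + Cmod x).
    { replace (RtoC 1) with ((1 - x) + x) at 1 by ring. apply Cmod_triangle. }
    rewrite Cmod_1 in H. replace (1 - x) with (- (x - 1)) in H by ring.
    rewrite Cmod_opp in H. lra. }
  assert (Hx0 : x <> 0).
  { intro H0. rewrite H0, Cmod_0 in Hx2. lra. }
  destruct (Z_cases k) as [n [-> | ->]].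
  - rewrite Zabs2Nat.id, Czpow_of_nat. apply Cpow_bound; lra.
  - replace (Z.abs_nat (- Z.of_nat n)) with n by lia.
    rewrite Czpow_opp_nat, <- Cpow_inv by auto. apply Cpow_bound.
    + rewrite Cmod_inv by auto.
      apply (Rmult_le_reg_l (Cmod x)); [lra|]. rewrite Rinv_r by lra. nra.
    + replace (/ x - 1) with ((1 - x) / x) by (field; auto).
      rewrite Cmod_div by auto. replace (1 - x) with (- (x - 1)) by ring. rewrite Cmod_opp.
      apply (Rmult_le_reg_l (Cmod x)); [lra|]. unfold Rdiv.
      replace (Cmod x * (Cmod (x - 1) * / Cmod x))%R with (Cmod (x - 1)) by (field; lra).
      nra.
Qed.

Lemma mono_bound (x y : C) (d : R) a b B : Cmod (x - 1) <= d -> d <= / 2 ->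
  Cmod (y - 1) <= d -> (Z.abs a <= Z.of_nat B)%Z -> (Z.abs b <= Z.of_nat B)%Z ->
  Cmod (Czpow x a * Czpow y b - 1) <= 4 * INR B * d * (3 ^ B * 3 ^ B).
Proof.
  intros Hx Hd Hy Ha Hb.
  assert (Hd0 : 0 <= d) by (pose proof (Cmod_ge_0 (x - 1)); lra).
  destruct (Czpow_bound x d a Hx Hd) as [A1 A2].
  destruct (Czpow_bound y d b Hy Hd) as [B1 B2].
  assert (Na : (Z.abs_nat a <= B)%nat) by lia.
  assert (Nb : (Z.abs_nat b <= B)%nat) by lia.
  assert (P1 : (3 ^ Z.abs_nat a <= 3 ^ B)%R) by (apply Rle_pow; lra || auto).
  assert (P2 : (3 ^ Z.abs_nat b <= 3 ^ B)%R) by (apply Rle_pow; lra || auto).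
  assert (I1 : INR (Z.abs_nat a) <= INR B) by (apply le_INR; auto).
  assert (I2 : INR (Z.abs_nat b) <= INR B) by (apply le_INR; auto).
  assert (G1 : (1 <= 3 ^ B)%R) by (apply pow_R1_Rle; lra).
  assert (G0 : 0 <= INR (Z.abs_nat a)) by apply pos_INR.
  assert (G0' : 0 <= INR (Z.abs_nat b)) by apply pos_INR.
  assert (G3 : (0 < 3 ^ Z.abs_nat b)%R) by (apply pow_lt; lra).
  assert (G4 : (0 < 3 ^ Z.abs_nat a)%R) by (apply pow_lt; lra).
  replace (Czpow x a * Czpow y b - 1) with (Czpow x a * (Czpow y b - 1) + (Czpow x a - 1)) by ring.
  eapply Rle_trans; [apply Cmod_triangle|]. rewrite Cmod_mult.
  assert (Q1 : (Cmod (Czpow x a) * Cmod (Czpow y b - 1) <= 3 ^ B * (INR B * (2 * d) * 3 ^ B))%R).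
  { apply Rmult_le_compat; [apply Cmod_ge_0 | apply Cmod_ge_0 | lra | ].
    eapply Rle_trans; [exact B2|].
    apply Rmult_le_compat; nra. }
  assert (Q2 : (Cmod (Czpow x a - 1) <= INR B * (2 * d) * 3 ^ B)%R).
  { eapply Rle_trans; [exact A2|]. apply Rmult_le_compat; nra. }
  assert (0 <= INR B) by apply pos_INR.
  assert (Hm : (0 <= INR B * d * 3 ^ B)%R) by (apply Rmult_le_pos; nra).
  assert (Hm2 : (INR B * d * 3 ^ B <= INR B * d * 3 ^ B * 3 ^ B)%R) by nra.
  replace (4 * INR B * d * (3 ^ B * 3 ^ B))%R with (2 * (INR B * d * 3 ^ B * 3 ^ B) + 2 * (INR B * d * 3 ^ B * 3 ^ B))%R by ring.
  replace (3 ^ B * (INR B * (2 * d) * 3 ^ B))%R with (2 * (INR B * d * 3 ^ B * 3 ^ B))%R in Q1 by ring.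
  replace (INR B * (2 * d) * 3 ^ B)%R with (2 * (INR B * d * 3 ^ B))%R in Q2 by ring.
  lra.
Qed.

Lemma ev_diff_bound p B l (x y : C) (d : R) : bounded p B l ->
  Cmod (x - 1) <= d -> d <= / 2 -> Cmod (y - 1) <= d ->
  Cmod (ev p x y - ev p 1 1) <= INR l * (4 * INR B * d * (3 ^ B * 3 ^ B)).
Proof.
  intros [Hl Hf] Hx Hd Hy.
  assert (Hd0 : 0 <= d) by (pose proof (Cmod_ge_0 (x - 1)); lra).
  assert (K0 : (0 <= 4 * INR B * d * (3 ^ B * 3 ^ B))%R).
  { assert (0 <= INR B) by apply pos_INR. assert ((0 < 3 ^ B)%R) by (apply pow_lt; lra).
    apply Rmult_le_pos; [|nra]. nra. }
  apply Rle_trans with (INR (length p) * (4 * INR B * d * (3 ^ B * 3 ^ B)))%R.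
  2:{ apply Rmult_le_compat_r; auto. apply le_INR; auto. }
  clear Hl. induction p as [|m p IH].
  - unfold ev; simpl. replace (0 - 0) with (RtoC 0) by ring. rewrite Cmod_0. lra.
  - inversion Hf as [|? ? Hm Hp]; subst. destruct Hm as [Hc [Ha Hb]].
    rewrite !ev_cons. rewrite !Czpow_one.
    replace (mc m * Czpow x (ma m) * Czpow y (mb m) + ev p x y - (mc m * 1 * 1 + ev p 1 1))
      with (mc m * (Czpow x (ma m) * Czpow y (mb m) - 1) + (ev p x y - ev p 1 1)) by ring.
    eapply Rle_trans; [apply Cmod_triangle|]. rewrite Cmod_mult, Cmod_R.
    pose proof (mono_bound x y d _ _ B Hx Hd Hy Ha Hb).
    specialize (IH Hp). simpl length. rewrite S_INR.
    assert (Rabs (mc m) * Cmod (Czpow x (ma m) * Czpow y (mb m) - 1) <= 1 * (4 * INR B * d * (3 ^ B * 3 ^ B)))%R.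
    { apply Rmult_le_compat; auto using Rabs_pos, Cmod_ge_0. }
    lra.
Qed.

Fixpoint csum (a : nat -> C) (n : nat) : C :=
  match n with O => a O | S k => csum a k + a (S k) end.
Fixpoint rsum (a : nat -> R) (n : nat) : R :=
  match n with O => a O | S k => (rsum a k + a (S k))%R end.

Lemma sum_n_csum (a : nat -> C) n : sum_n a n = csum a n.
Proof. induction n; simpl. apply sum_O. rewrite sum_Sn, IHn. reflexivity. Qed.

Lemma csum_ext (a b : nat -> C) n : (forall i, (i <= n)%nat -> a i = b i) -> csum a n = csum b n.
Proof. induction n; intros H; simpl. apply H; lia. rewrite IHn, H; auto. Qed.
Lemma rsum_ext (a b : nat -> R) n : (forall i, (i <= n)%nat -> a i = b i) -> rsum a n = rsum b n.
Proof. induction n; intros H; simpl. apply H; lia. rewrite IHn, H; auto. Qed.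
Lemma csum_plus (a b : nat -> C) n : csum (fun i => a i + b i) n = csum a n + csum b n.
Proof. induction n; simpl; [ring|]. rewrite IHn; ring. Qed.
Lemma csum_scal (c : C) (a : nat -> C) n : csum (fun i => c * a i) n = c * csum a n.
Proof. induction n; simpl; [ring|]. rewrite IHn; ring. Qed.
Lemma rsum_plus (a b : nat -> R) n : rsum (fun i => a i + b i)%R n = (rsum a n + rsum b n)%R.
Proof. induction n; simpl; [ring|]. rewrite IHn; ring. Qed.
Lemma rsum_scal (c : R) (a : nat -> R) n : rsum (fun i => c * a i)%R n = (c * rsum a n)%R.
Proof. induction n; simpl; [ring|]. rewrite IHn; ring. Qed.
Lemma rsum_le (a b : nat -> R) n : (forall i, a i <= b i) -> rsum a n <= rsum b n.
Proof. induction n; intros H; simpl. apply H. specialize (IHn H). specialize (H (S n)). lra. Qed.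
Lemma rsum_nonneg (a : nat -> R) n : (forall i, 0 <= a i) -> 0 <= rsum a n.
Proof. induction n; intros H; simpl. apply H. specialize (IHn H). specialize (H (S n)). lra. Qed.
Lemma csum_norm (a : nat -> C) n : Cmod (csum a n) <= rsum (fun i => Cmod (a i)) n.
Proof.
  induction n; simpl. lra. eapply Rle_trans; [apply Cmod_triangle|]. lra.
Qed.
Lemma csum_shift (a : nat -> C) n : csum a (S n) = a O + csum (fun i => a (S i)) n.
Proof. induction n; simpl in *; [ring|]. rewrite IHn. ring. Qed.
Lemma rsum_shift (a : nat -> R) n : rsum a (S n) = (a O + rsum (fun i => a (S i)) n)%R.
Proof. induction n; simpl in *; [ring|]. rewrite IHn. ring. Qed.

Definition zC (g : Z -> C) (N : nat) : C := csum (fun i => g (Z.of_nat i - Z.of_nat N)%Z) (2 * N).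
Definition zR (g : Z -> R) (N : nat) : R := rsum (fun i => g (Z.of_nat i - Z.of_nat N)%Z) (2 * N).

Lemma zC_S g N : zC g (S N) = g (- (Z.of_nat N + 1))%Z + zC g N + g (Z.of_nat N + 1)%Z.
Proof.
  unfold zC. replace (2 * S N)%nat with (S (S (2 * N))) by lia.
  change (csum ?a (S (S ?n))) with (csum a (S n) + a (S (S n))).
  rewrite csum_shift. f_equal; [f_equal|].
  - f_equal. lia.
  - apply csum_ext. intros i _. f_equal. lia.
  - f_equal. lia.
Qed.

Lemma zR_S g N : zR g (S N) = (g (- (Z.of_nat N + 1))%Z + zR g N + g (Z.of_nat N + 1)%Z)%R.
Proof.
  unfold zR. replace (2 * S N)%nat with (S (S (2 * N))) by lia.
  change (rsum ?a (S (S ?n))) with (rsum a (S n) + a (S (S n)))%R.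
  rewrite rsum_shift. f_equal; [f_equal|].
  - f_equal. lia.
  - apply rsum_ext. intros i _. f_equal. lia.
  - f_equal. lia.
Qed.

Lemma psum2_zC f N : psum2 f N = zC (fun a => zC (fun b => f a b) N) N.
Proof.
  unfold psum2, zC. rewrite sum_n_csum. apply csum_ext. intros i _.
  rewrite sum_n_csum. reflexivity.
Qed.

Lemma zC_ext g h N : (forall i, g i = h i) -> zC g N = zC h N.
Proof. intros H. unfold zC. apply csum_ext. intros; apply H. Qed.
Lemma zR_ext g h N : (forall i, g i = h i) -> zR g N = zR h N.
Proof. intros H. unfold zR. apply rsum_ext. intros; apply H. Qed.
Lemma zC_plus g h N : zC (fun i => g i + h i) N = zC g N + zC h N.
Proof. apply csum_plus. Qed.
Lemma zC_scal c g N : zC (fun i => c * g i) N = c * zC g N.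
Proof. apply csum_scal. Qed.
Lemma zR_scal c g N : zR (fun i => c * g i)%R N = (c * zR g N)%R.
Proof. apply rsum_scal. Qed.
Lemma zR_le g h N : (forall i, g i <= h i) -> zR g N <= zR h N.
Proof. intros H. apply rsum_le. intros; apply H. Qed.
Lemma zR_nonneg g N : (forall i, 0 <= g i) -> 0 <= zR g N.
Proof. intros H. apply rsum_nonneg. intros; apply H. Qed.
Lemma zC_norm g N : Cmod (zC g N) <= zR (fun i => Cmod (g i)) N.
Proof. apply csum_norm. Qed.

Lemma psum2_ext f g N : (forall i j, f i j = g i j) -> psum2 f N = psum2 g N.
Proof. intros H. rewrite !psum2_zC. apply zC_ext. intros a. apply zC_ext. intros b. apply H. Qed.

Lemma psum2_lin f g (c : C) N :
  psum2 (fun i j => f i j + c * g i j) N = psum2 f N + c * psum2 g N.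
Proof.
  rewrite !psum2_zC. rewrite <- zC_scal, <- zC_plus. apply zC_ext. intros a.
  rewrite <- zC_scal, <- zC_plus. reflexivity.
Qed.

Lemma ball_C (l z : C) (e : R) : ball l e z <-> ball (Re l) e (Re z) /\ ball (Im l) e (Im z).
Proof. split; intros H; exact H. Qed.

Lemma is_zsum2_iff f l : is_zsum2 f l <->
  is_lim_seq (fun N => Re (psum2 f N)) (Re l) /\ is_lim_seq (fun N => Im (psum2 f N)) (Im l).
Proof.
  unfold is_zsum2, is_lim_seq. split.
  - intros H. split.
    + apply (filterlim_locally (F := eventually)). intros eps.
      apply (filterlim_locally (F := eventually)) with (eps := eps) in H.
      revert H. apply filter_imp. intros N HN. apply ball_C in HN. apply HN.
    + apply (filterlim_locally (F := eventually)). intros eps.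
      apply (filterlim_locally (F := eventually)) with (eps := eps) in H.
      revert H. apply filter_imp. intros N HN. apply ball_C in HN. apply HN.
  - intros [H1 H2]. apply (filterlim_locally (F := eventually)). intros eps.
    apply (filterlim_locally (F := eventually)) with (eps := eps) in H1.
    apply (filterlim_locally (F := eventually)) with (eps := eps) in H2.
    generalize (filter_and _ _ H1 H2). apply filter_imp. intros N HN.
    apply ball_C. exact HN.
Qed.

Lemma zsum2_eq f l : is_zsum2 f l -> zsum2 f = l.
Proof.
  intros H. apply is_zsum2_iff in H. destruct H as [H1 H2].
  unfold zsum2. rewrite (is_lim_seq_unique _ _ H1), (is_lim_seq_unique _ _ H2). simpl.
  destruct l; reflexivity.
Qed.

Lemma lim_scal (a : R) u (l : R) : is_lim_seq u l -> is_lim_seq (fun n => a * u n)%R (a * l)%R.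
Proof. intros; apply is_lim_seq_mult'; auto; apply is_lim_seq_const. Qed.

Lemma is_zsum2_lin f g l m (c : C) : is_zsum2 f l -> is_zsum2 g m ->
  is_zsum2 (fun i j => f i j + c * g i j) (l + c * m).
Proof.
  rewrite !is_zsum2_iff. intros [F1 F2] [G1 G2].
  split.
  - apply is_lim_seq_ext with
      (fun N => Re (psum2 f N) + (Re c * Re (psum2 g N) - Im c * Im (psum2 g N)))%R.
    { intros N. rewrite psum2_lin. generalize (psum2 f N) (psum2 g N). intros [a1 a2] [b1 b2]. destruct c. simpl. ring. }
    replace (Re (l + c * m)) with (Re l + (Re c * Re m - Im c * Im m))%R by (destruct l, c, m; simpl; ring).
    apply is_lim_seq_plus'; auto. apply is_lim_seq_minus'; apply lim_scal; auto.
  - apply is_lim_seq_ext with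
      (fun N => Im (psum2 f N) + (Re c * Im (psum2 g N) + Im c * Re (psum2 g N)))%R.
    { intros N. rewrite psum2_lin. generalize (psum2 f N) (psum2 g N). intros [a1 a2] [b1 b2]. destruct c. simpl. ring. }
    replace (Im (l + c * m)) with (Im l + (Re c * Im m + Im c * Re m))%R by (destruct l, c, m; simpl; ring).
    apply is_lim_seq_plus'; auto. apply is_lim_seq_plus'; apply lim_scal; auto.
Qed.

Lemma is_zsum2_ext f g l : (forall i j, f i j = g i j) -> is_zsum2 f l -> is_zsum2 g l.
Proof.
  intros H. unfold is_zsum2. apply filterlim_ext. intros N. apply psum2_ext. auto.
Qed.

Lemma lim_abs_le (u : nat -> R) (l K : R) : is_lim_seq u l -> (forall n, Rabs (u n) <= K) -> Rabs l <= K.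
Proof.
  intros H HK. apply is_lim_seq_abs in H.
  assert (Hc : is_lim_seq (fun _ => K) K) by apply is_lim_seq_const.
  pose proof (is_lim_seq_le _ _ _ _ HK H Hc). simpl in H0. exact H0.
Qed.

Lemma Cmod_le_sum (z : C) : Cmod z <= Rabs (Re z) + Rabs (Im z).
Proof.
  unfold Cmod. pose proof (Rabs_pos (fst z)). pose proof (Rabs_pos (snd z)).
  rewrite <- (sqrt_square (Rabs (Re z) + Rabs (Im z))) by (apply Rplus_le_le_0_compat; apply Rabs_pos).
  apply sqrt_le_1_alt. pose proof (pow2_abs (fst z)). pose proof (pow2_abs (snd z)).
  unfold Re, Im. nra.
Qed.

Lemma is_zsum2_bound f l K : is_zsum2 f l -> (forall N, Cmod (psum2 f N) <= K) -> Cmod l <= 2 * K.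
Proof.
  intros H HK. apply is_zsum2_iff in H. destruct H as [H1 H2].
  assert (A1 : Rabs (Re l) <= K).
  { apply (lim_abs_le _ _ _ H1). intros n. eapply Rle_trans; [apply re_le_Cmod| apply HK]. }
  assert (A2 : Rabs (Im l) <= K).
  { apply (lim_abs_le _ _ _ H2). intros n. eapply Rle_trans; [|apply (HK n)].
    pose proof (Cmod_le_sum (psum2 f n)) as Hs.
    unfold Cmod. rewrite <- (sqrt_square (Rabs (Im (psum2 f n)))) by apply Rabs_pos.
    apply sqrt_le_1_alt. unfold Im.
    assert (E : (Rabs (snd (psum2 f n)) * Rabs (snd (psum2 f n)) = snd (psum2 f n) ^ 2)%R)
      by (rewrite <- pow2_abs; ring).
    rewrite E. pose proof (pow2_ge_0 (fst (psum2 f n))). lra. }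
  eapply Rle_trans; [apply Cmod_le_sum|]. lra.
Qed.

Lemma zC_bound g w N : (forall i, Cmod (g i) <= w i) -> Cmod (zC g N) <= zR w N.
Proof. intros H. eapply Rle_trans; [apply zC_norm|]. apply zR_le. auto. Qed.

Lemma maj_step f (v : Z -> R) (K : R) N : (forall i, 0 <= v i) -> 0 <= K ->
  (forall i j, Cmod (f i j) <= K * (v i * v j)) ->
  Cmod (psum2 f (S N) - psum2 f N) <= K * (zR v (S N) ^ 2 - zR v N ^ 2).
Proof.
  intros Hv HK Hf. rewrite !psum2_zC.
  set (m := (- (Z.of_nat N + 1))%Z). set (p := (Z.of_nat N + 1)%Z).
  rewrite zC_S. fold m p.
  rewrite (zC_ext (fun a => zC (fun b => f a b) (S N))
                  (fun a => (f a m + f a p) + zC (fun b => f a b) N)).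
  2:{ intros a. rewrite zC_S. fold m p. ring. }
  rewrite zC_plus.
  replace (zC (fun b : Z => f m b) (S N) + (zC (fun i : Z => f i m + f i p) N + zC (fun a : Z => zC (fun b : Z => f a b) N) N) +
     zC (fun b : Z => f p b) (S N) - zC (fun a : Z => zC (fun b : Z => f a b) N) N)
    with (zC (fun b : Z => f m b) (S N) + zC (fun b : Z => f p b) (S N) + zC (fun i : Z => f i m + f i p) N) by ring.
  assert (B1 : Cmod (zC (fun b => f m b) (S N)) <= K * v m * zR v (S N)).
  { rewrite <- zR_scal. apply zC_bound. intros b. rewrite Rmult_assoc. apply Hf. }
  assert (B2 : Cmod (zC (fun b => f p b) (S N)) <= K * v p * zR v (S N)).
  { rewrite <- zR_scal. apply zC_bound. intros b. rewrite Rmult_assoc. apply Hf. }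
  assert (B3 : Cmod (zC (fun i => f i m + f i p) N) <= K * (v m + v p) * zR v N).
  { rewrite <- zR_scal. apply zC_bound. intros a.
    eapply Rle_trans; [apply Cmod_triangle|].
    pose proof (Hf a m). pose proof (Hf a p). nra. }
  pose proof (zR_S v N) as ES. fold m p in ES.
  eapply Rle_trans; [apply Cmod_triangle|].
  eapply Rle_trans; [apply Rplus_le_compat_r, Cmod_triangle|].
  rewrite ES. rewrite ES in B1, B2. nra.
Qed.

Lemma im_le_Cmod (z : C) : Rabs (Im z) <= Cmod z.
Proof.
  unfold Cmod. rewrite <- (sqrt_square (Rabs (Im z))) by apply Rabs_pos.
  apply sqrt_le_1_alt. unfold Im.
  assert (E : (Rabs (snd z) * Rabs (snd z) = snd z ^ 2)%R) by (rewrite <- pow2_abs; ring).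
  rewrite E. pose proof (pow2_ge_0 (fst z)). lra.
Qed.

Lemma zR_incr v N : (forall i, 0 <= v i) -> zR v N <= zR v (S N).
Proof. intros H. rewrite zR_S. pose proof (H (- (Z.of_nat N + 1))%Z). pose proof (H (Z.of_nat N + 1)%Z). lra. Qed.

Lemma psum2_bound f v K N : (forall i, 0 <= v i) -> 0 <= K ->
  (forall i j, Cmod (f i j) <= K * (v i * v j)) -> Cmod (psum2 f N) <= K * zR v N ^ 2.
Proof.
  intros Hv HK Hf. rewrite psum2_zC.
  apply Rle_trans with (zR (fun a => K * v a * zR v N) N)%R.
  - apply zC_bound. intros a. rewrite <- zR_scal. apply zC_bound. intros b.
    rewrite Rmult_assoc. apply Hf.
  - rewrite (zR_ext _ (fun a => (K * zR v N) * v a)%R) by (intros; ring).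
    rewrite zR_scal. right. ring.
Qed.

Lemma maj_conv f (v : Z -> R) (K Tb : R) : (forall i, 0 <= v i) -> 0 <= K ->
  (forall N, zR v N <= Tb) -> (forall i j, Cmod (f i j) <= K * (v i * v j)) ->
  is_zsum2 f (zsum2 f) /\ (forall N, Cmod (psum2 f N) <= K * Tb ^ 2).
Proof.
  intros Hv HK HT Hf.
  assert (HT0 : forall N, 0 <= zR v N) by (intros; apply zR_nonneg; auto).
  split.
  2:{ intros N. eapply Rle_trans; [apply (psum2_bound f v K N); auto|].
      apply Rmult_le_compat_l; auto. pose proof (HT0 N). pose proof (HT N). nra. }
  assert (Hd : forall M k, Cmod (psum2 f (M + k) - psum2 f M) <= K * (zR v (M + k) ^ 2 - zR v M ^ 2)).
  { intros M k. induction k.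
    - rewrite Nat.add_0_r. replace (psum2 f M - psum2 f M) with (RtoC 0) by ring.
      rewrite Cmod_0. lra.
    - replace (M + S k)%nat with (S (M + k)) by lia.
      replace (psum2 f (S (M + k)) - psum2 f M) with
        ((psum2 f (S (M + k)) - psum2 f (M + k)) + (psum2 f (M + k) - psum2 f M)) by ring.
      eapply Rle_trans; [apply Cmod_triangle|].
      pose proof (maj_step f v K (M + k) Hv HK Hf). lra. }
  assert (Hlim : ex_finite_lim_seq (zR v)).
  { apply ex_finite_lim_seq_incr with Tb; auto. intros; apply zR_incr; auto. }
  assert (Hsq : ex_finite_lim_seq (fun N => zR v N ^ 2)%R).
  { destruct Hlim as [l Hl]. exists (l * l)%R. unfold is_lim_seq.
    apply is_lim_seq_ext with (fun N => zR v N * zR v N)%R; [intros; ring|].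
    apply is_lim_seq_mult'; auto. }
  apply ex_lim_seq_cauchy_corr in Hsq.
  assert (Hc : forall (proj : C -> R), (forall z, Rabs (proj z) <= Cmod z) ->
     (forall a b : C, proj (a - b) = (proj a - proj b)%R) ->
     ex_finite_lim_seq (fun N => proj (psum2 f N))).
  { intros proj Hp Hm. apply ex_lim_seq_cauchy_corr. intros eps.
    assert (He : 0 < eps / (K + 1)) by (apply Rdiv_lt_0_compat; [apply cond_pos| lra]).
    destruct (Hsq (mkposreal _ He)) as [N0 HN0]. exists N0. intros n m Hn Hm'.
    assert (Hgen : forall a b, (N0 <= a)%nat -> (N0 <= b)%nat -> (b <= a)%nat ->
       Rabs (proj (psum2 f a) - proj (psum2 f b)) < eps).
    { intros a b Ha Hb Hab. rewrite <- Hm.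
      eapply Rle_lt_trans; [apply Hp|].
      replace a with (b + (a - b))%nat by lia.
      eapply Rle_lt_trans; [apply Hd|].
      specialize (HN0 (b + (a - b))%nat b ltac:(lia) Hb). simpl in HN0.
      rewrite Rabs_right in HN0.
      2:{ pose proof (HT0 b). pose proof (HT0 (b + (a - b))%nat).
          assert (zR v b <= zR v (b + (a - b))%nat).
          { clear -Hv. induction (a - b)%nat. rewrite Nat.add_0_r; lra.
            replace (b + S n)%nat with (S (b + n)) by lia.
            eapply Rle_trans; [exact IHn| apply zR_incr; auto]. }
          nra. }
      apply Rle_lt_trans with (K * (eps / (K + 1)))%R.
      - apply Rmult_le_compat_l; lra.
      - pose proof (cond_pos eps). apply (Rmult_lt_reg_r (K + 1)); [lra|].
        replace (K * (eps / (K + 1)) * (K + 1))%R with (K * eps)%R by (field; lra). nra. }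
    destruct (le_ge_dec m n).
    - apply Hgen; auto.
    - rewrite Rabs_minus_sym. apply Hgen; auto. }
  destruct (Hc Re re_le_Cmod) as [lr Hr].
  { intros a b. destruct a, b. simpl. ring. }
  destruct (Hc Im im_le_Cmod) as [li Hi].
  { intros a b. destruct a, b. simpl. ring. }
  assert (Hz : is_zsum2 f (lr, li)) by (apply is_zsum2_iff; split; auto).
  rewrite (zsum2_eq _ _ Hz). exact Hz.
Qed.

Lemma csum_rev (a : nat -> C) n : csum a n = csum (fun i => a (n - i)%nat) n.
Proof.
  induction n.
  - reflexivity.
  - change (csum a (S n)) with (csum a n + a (S n)).
    rewrite (csum_shift (fun i => a (S n - i)%nat) n). rewrite IHn.
    rewrite Nat.sub_0_r, Cplus_comm. f_equal.
Qed.

Lemma antisym_zero g (v : Z -> R) (K Tb : R) : (forall i, 0 <= v i) -> 0 <= K ->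
  (forall N, zR v N <= Tb) -> (forall i j, Cmod (g i j) <= K * (v i * v j)) ->
  (forall i j, g (1 - i)%Z (1 - j)%Z = - g i j) -> is_zsum2 g 0.
Proof.
  intros Hv HK HT Hg Hanti.
  assert (HT0 : forall N, 0 <= zR v N) by (intros; apply zR_nonneg; auto).
  set (G := fun (N i j : nat) => g (Z.of_nat i - Z.of_nat N)%Z (Z.of_nat j - Z.of_nat N)%Z).
  assert (HW : forall N, csum (fun i => csum (fun j => G N i j) (S (2 * N))) (S (2 * N)) = 0).
  { intros N. set (W := csum (fun i => csum (fun j => G N i j) (S (2 * N))) (S (2 * N))).
    assert (E : W = Copp 1 * W).
    { unfold W at 1. rewrite csum_rev. unfold W.
      rewrite <- csum_scal. apply csum_ext. intros i Hi.
      rewrite csum_rev. rewrite <- csum_scal. apply csum_ext. intros j Hj.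
      unfold G. replace (Z.of_nat (S (2 * N) - i) - Z.of_nat N)%Z with (1 - (Z.of_nat i - Z.of_nat N))%Z by lia.
      replace (Z.of_nat (S (2 * N) - j) - Z.of_nat N)%Z with (1 - (Z.of_nat j - Z.of_nat N))%Z by lia.
      rewrite Hanti. ring. }
    assert (E2 : W + W = 0) by (rewrite E at 2; ring).
    replace W with ((W + W) / 2) by (field; apply RtoC_neq; lra).
    rewrite E2. field. }
  assert (Hdec : forall N, psum2 g N =
     - (csum (fun j => G N (S (2 * N)) j) (2 * N) + csum (fun i => G N i (S (2 * N))) (S (2 * N)))).
  { intros N. pose proof (HW N) as H0.
    assert (H1 : csum (fun i => csum (fun j => G N i j) (S (2 * N))) (S (2 * N)) =
       csum (fun i => csum (fun j => G N i j) (2 * N) + G N i (S (2 * N))) (S (2 * N))) by reflexivity.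
    rewrite H1, csum_plus in H0.
    change (csum (fun i => csum (fun j => G N i j) (2 * N)) (S (2 * N))) with
      (csum (fun i => csum (fun j => G N i j) (2 * N)) (2 * N) + csum (fun j => G N (S (2 * N)) j) (2 * N)) in H0.
    rewrite psum2_zC. unfold zC.
    change (csum (fun i => csum (fun j => G N i j) (2 * N)) (2 * N) = 
      - (csum (fun j => G N (S (2 * N)) j) (2 * N) + csum (fun i => G N i (S (2 * N))) (S (2 * N)))).
    set (X := csum (fun i => csum (fun j => G N i j) (2 * N)) (2 * N)) in *.
    set (B := csum (fun j => G N (S (2 * N)) j) (2 * N)) in *.
    set (Cc := csum (fun i => G N i (S (2 * N))) (S (2 * N))) in *.
    replace X with ((X + B + Cc) - (B + Cc)) by ring. rewrite H0. ring. }
  set (e := fun N : nat => v (Z.of_nat N + 1)%Z).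
  assert (Hb : forall N, Cmod (psum2 g N) <= K * e N * (2 * zR v N + e N)).
  { intros N. rewrite Hdec, Cmod_opp.
    eapply Rle_trans; [apply Cmod_triangle|].
    assert (B1 : Cmod (csum (fun j => G N (S (2 * N)) j) (2 * N)) <= K * e N * zR v N).
    { eapply Rle_trans; [apply csum_norm|]. unfold zR. rewrite <- rsum_scal.
      apply rsum_le. intros j. unfold G, e.
      replace (Z.of_nat (S (2 * N)) - Z.of_nat N)%Z with (Z.of_nat N + 1)%Z by lia.
      rewrite Rmult_assoc. apply Hg. }
    assert (B2 : Cmod (csum (fun i => G N i (S (2 * N))) (S (2 * N))) <= K * e N * (zR v N + e N)).
    { eapply Rle_trans; [apply csum_norm|].
      replace (zR v N + e N)%R with (rsum (fun i => v (Z.of_nat i - Z.of_nat N)%Z) (S (2 * N))).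
      2:{ change (rsum ?a (S ?n)) with (rsum a n + a (S n))%R. unfold zR, e. f_equal. f_equal. lia. }
      rewrite <- rsum_scal.
      apply rsum_le. intros i. unfold G, e.
      replace (Z.of_nat (S (2 * N)) - Z.of_nat N)%Z with (Z.of_nat N + 1)%Z by lia.
      rewrite Rmult_assoc, (Rmult_comm (v _)). apply Hg. }
    lra. }
  assert (He0 : forall N, 0 <= e N) by (intros; apply Hv).
  set (d := fun N : nat => (zR v (S N) - zR v N)%R).
  assert (Hed : forall N, e N <= d N).
  { intros N. unfold d, e. rewrite zR_S. pose proof (Hv (- (Z.of_nat N + 1))%Z). lra. }
  assert (Hlim : ex_finite_lim_seq (zR v)).
  { apply ex_finite_lim_seq_incr with Tb; auto. intros; apply zR_incr; auto. }
  destruct Hlim as [l Hl].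
  assert (Hd0 : is_lim_seq d 0).
  { unfold d. replace 0%R with (l - l)%R by ring. apply is_lim_seq_minus'; auto.
    apply (is_lim_seq_incr_1 (zR v)). auto. }
  set (b := fun N => (K * d N * (2 * Tb + d N))%R).
  assert (Hb0 : is_lim_seq b 0).
  { unfold b. replace 0%R with (K * 0 * (2 * Tb + 0))%R by ring.
    apply is_lim_seq_mult'; [apply lim_scal; auto|].
    apply is_lim_seq_plus'; auto. apply is_lim_seq_const. }
  assert (Hbb : forall N, Cmod (psum2 g N) <= b N).
  { intros N. eapply Rle_trans; [apply Hb|]. unfold b.
    pose proof (HT N). pose proof (HT0 N). pose proof (He0 N). pose proof (Hed N).
    apply Rmult_le_compat; try nra. }
  apply is_zsum2_iff. split.
  - apply is_lim_seq_le_le with (fun N => - b N)%R b.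
    + intros N. pose proof (re_le_Cmod (psum2 g N)). pose proof (Hbb N).
      apply Rabs_le_between. lra.
    + replace (Re 0) with (- 0)%R by (simpl; ring). apply (is_lim_seq_opp b 0). auto.
    + replace (Re 0) with 0%R by reflexivity. auto.
  - apply is_lim_seq_le_le with (fun N => - b N)%R b.
    + intros N. pose proof (im_le_Cmod (psum2 g N)). pose proof (Hbb N).
      apply Rabs_le_between. lra.
    + replace (Im 0) with (- 0)%R by (simpl; ring). apply (is_lim_seq_opp b 0). auto.
    + replace (Im 0) with 0%R by reflexivity. auto.
Qed.

Lemma exp_le_mono (a b : R) : (a <= b)%R -> (exp a <= exp b)%R.
Proof. intros H. destruct (Rle_lt_or_eq_dec _ _ H). left; apply exp_increasing; auto. right; subst; auto. Qed.

Lemma qpow_mod tau x : Cmod (qpow tau x) = exp (- (2 * PI * Im tau * x)).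
Proof.
  unfold qpow, Cmod. cbv zeta. cbn [fst snd].
  set (e := exp (- (2 * PI * Im tau * x))). set (t := (2 * PI * Re tau * x)%R).
  replace ((e * cos t) ^ 2 + (e * sin t) ^ 2)%R with (e * e)%R.
  - apply sqrt_square. unfold e. left; apply exp_pos.
  - pose proof (sin2_cos2 t) as H. unfold Rsqr in H.
    transitivity (e * e * (sin t * sin t + cos t * cos t))%R; [rewrite H; ring| ring].
Qed.

Lemma E_lower (a b : R) : ((a - / 2) ^ 2 + (b - / 2) ^ 2 <= 2 * Qf (a - / 2) (b - / 2))%R.
Proof. unfold Qf. pose proof (pow2_ge_0 (a - b)). nra. Qed.

Definition uexp (c : R) (i : Z) : R := exp (- (c * (IZR i - / 2) ^ 2)).

Lemma qpow_E_bound tau n1 n2 : 0 < Im tau ->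
  Cmod (qpow tau (2 * Qf (IZR n1 - / 2) (IZR n2 - / 2))%R) <=
  uexp (2 * PI * Im tau) n1 * uexp (2 * PI * Im tau) n2.
Proof.
  intros Ht. rewrite qpow_mod. unfold uexp. rewrite <- exp_plus. apply exp_le_mono.
  pose proof (E_lower (IZR n1) (IZR n2)). pose proof PI_RGT_0.
  assert (0 < 2 * PI * Im tau)%R by (apply Rmult_lt_0_compat; lra).
  nra.
Qed.

Lemma exp_INR_pow (a : R) k : exp (INR k * a) = (exp a ^ k)%R.
Proof.
  induction k. simpl. rewrite Rmult_0_l, exp_0. reflexivity.
  rewrite S_INR, Rmult_plus_distr_r, Rmult_1_l, exp_plus, IHk. simpl. ring.
Qed.

Lemma gauss_geom (A c : R) (k : nat) : 1 <= A -> 0 < c ->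
  ((2 * A) ^ k * exp (- (c * (INR k - / 2) ^ 2)) <=
   exp (ln (2 * A) / 2 + ln (2 * A) ^ 2 / (4 * c)))%R.
Proof.
  intros HA Hc. set (a := ln (2 * A)).
  replace ((2 * A) ^ k)%R with (exp (INR k * a)).
  2:{ rewrite exp_INR_pow. unfold a. rewrite exp_ln by lra. reflexivity. }
  rewrite <- exp_plus. apply exp_le_mono.
  assert (H : (0 <= (2 * c * (INR k - / 2) - a) ^ 2)%R) by apply pow2_ge_0.
  apply (Rmult_le_reg_l (4 * c)); [lra|].
  replace (4 * c * (a / 2 + a ^ 2 / (4 * c)))%R with (2 * c * a + a ^ 2)%R by (field; lra).
  nra.
Qed.

Lemma half_sum N : zR (fun i => (/ 2) ^ (Z.abs_nat i))%R N = (3 - 2 * (/ 2) ^ N)%R.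
Proof.
  induction N.
  - unfold zR. simpl. ring.
  - rewrite zR_S, IHN.
    replace (Z.abs_nat (- (Z.of_nat N + 1))) with (S N) by lia.
    replace (Z.abs_nat (Z.of_nat N + 1)) with (S N) by lia.
    simpl. field.
Qed.

Definition vmaj (A c : R) (i : Z) : R := (A ^ (Z.abs_nat i) * uexp c i)%R.
Definition C0 (A c : R) : R := exp (ln (2 * A) / 2 + ln (2 * A) ^ 2 / (4 * c)).

Lemma INR_abs_nat (i : Z) : INR (Z.abs_nat i) = Rabs (IZR i).
Proof. rewrite INR_IZR_INZ, Nat2Z.inj_abs_nat, Rabs_Zabs. reflexivity. Qed.

Lemma vmaj_nonneg A c i : 1 <= A -> 0 <= vmaj A c i.
Proof.
  intros HA. unfold vmaj, uexp. apply Rmult_le_pos.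
  apply pow_le; lra. left; apply exp_pos.
Qed.

Lemma vmaj_geom A c i : 1 <= A -> 0 < c -> (vmaj A c i <= C0 A c * (/ 2) ^ (Z.abs_nat i))%R.
Proof.
  intros HA Hc. unfold vmaj, C0.
  pose proof (gauss_geom A c (Z.abs_nat i) HA Hc) as G.
  assert (U : (uexp c i <= exp (- (c * (INR (Z.abs_nat i) - / 2) ^ 2)))%R).
  { unfold uexp. apply exp_le_mono. rewrite INR_abs_nat.
    assert ((Rabs (IZR i) - / 2) ^ 2 <= (IZR i - / 2) ^ 2)%R.
    { destruct (Rle_or_lt 0 (IZR i)).
      - rewrite Rabs_right by lra. lra.
      - rewrite Rabs_left by lra. nra. }
    nra. }
  set (k := Z.abs_nat i) in *.
  assert (P : ((2 * A) ^ k = 2 ^ k * A ^ k)%R) by apply Rpow_mult_distr.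
  assert (Q : (2 ^ k * (/ 2) ^ k = 1)%R).
  { rewrite <- Rpow_mult_distr. rewrite Rinv_r by lra. apply pow1. }
  assert (HAk : (0 <= A ^ k)%R) by (apply pow_le; lra).
  assert (H2k : (0 < (/ 2) ^ k)%R) by (apply pow_lt; lra).
  apply Rle_trans with (A ^ k * exp (- (c * (INR k - / 2) ^ 2)))%R.
  { apply Rmult_le_compat_l; auto. }
  replace (A ^ k * exp (- (c * (INR k - / 2) ^ 2)))%R with
    ((2 * A) ^ k * exp (- (c * (INR k - / 2) ^ 2)) * (/ 2) ^ k)%R.
  2:{ rewrite P. replace (2 ^ k * A ^ k * exp (- (c * (INR k - / 2) ^ 2)) * (/ 2) ^ k)%R
        with ((2 ^ k * (/ 2) ^ k) * (A ^ k * exp (- (c * (INR k - / 2) ^ 2))))%R by ring.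
      rewrite Q. ring. }
  apply Rmult_le_compat_r; lra.
Qed.

Lemma vmaj_sum A c N : 1 <= A -> 0 < c -> (zR (vmaj A c) N <= 3 * C0 A c)%R.
Proof.
  intros HA Hc.
  apply Rle_trans with (zR (fun i => C0 A c * (/ 2) ^ (Z.abs_nat i)) N)%R.
  - apply zR_le. intros; apply vmaj_geom; auto.
  - rewrite zR_scal, half_sum. assert (0 < C0 A c)%R by apply exp_pos.
    assert (0 < (/ 2) ^ N)%R by (apply pow_lt; lra). nra.
Qed.

Lemma bounded_mono p B B' l l' : bounded p B l -> (B <= B')%nat -> (l <= l')%nat -> bounded p B' l'.
Proof.
  intros [H1 H2] HB Hl. split. lia.
  eapply List.Forall_impl; [|exact H2]. intros m [a [b c]]. split; auto. split; lia.
Qed.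

Definition sn (n1 n2 : Z) : nat := (Z.abs_nat n1 + Z.abs_nat n2)%nat.
Definition ellT (s : nat) : nat := ((3 * s + 4) * (6 * s + 10) * (12 * s + 22))%nat.
Definition BT (s : nat) : nat := (8 * s + 15)%nat.

Lemma Tn_bounded n1 n2 : bounded (Tn n1 n2) (BT (sn n1 n2)) (ellT (sn n1 n2)).
Proof.
  unfold Tn. set (s := sn n1 n2).
  assert (H0 : bounded (((1%R, (n1 - 1)%Z), (n2 - 1)%Z) :: nil) (s + 1) 1).
  { split; [simpl; lia|]. constructor; [|constructor].
    unfold mbound, mc, ma, mb; simpl. split; [rewrite Rabs_R1; lra|].
    unfold s, sn. split; lia. }
  apply D1_bounded in H0. apply D2_bounded in H0. apply D1_bounded in H0.
  eapply bounded_mono; [exact H0| unfold BT; lia | unfold ellT; lia].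
Qed.

Lemma ev_one_bound p B l : bounded p B l -> Cmod (ev p 1 1) <= INR l.
Proof.
  intros [Hl Hf]. apply Rle_trans with (INR (length p)); [| apply le_INR; auto].
  clear Hl. induction p as [|m p IH].
  - unfold ev; simpl. rewrite Cmod_0. lra.
  - inversion Hf as [|? ? Hm Hp]; subst. destruct Hm as [Hc _].
    rewrite ev_cons, !Czpow_one. eapply Rle_trans; [apply Cmod_triangle|].
    rewrite !Cmult_1_r, Cmod_R. simpl length. rewrite S_INR. specialize (IH Hp). lra.
Qed.

Definition Aconst : R := (16 * 3 ^ 16)%R.
Definition Kconst : R := (52800 * 3 ^ 30)%R.

Lemma INR_le_pow2 s : (INR s + 1 <= 2 ^ s)%R.
Proof.
  induction s. simpl. lra. rewrite S_INR. simpl.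
  assert (1 <= 2 ^ s)%R by (apply pow_R1_Rle; lra). lra.
Qed.

Lemma poly4_bound s : ((INR s + 1) ^ 4 <= 16 ^ s)%R.
Proof.
  pose proof (INR_le_pow2 s). pose proof (pos_INR s).
  replace (16 ^ s)%R with ((2 ^ s) ^ 4)%R.
  2:{ rewrite <- pow_mult, Nat.mul_comm, pow_mult. f_equal. simpl. ring. }
  apply pow_incr. lra.
Qed.

Lemma Aconst_pow s : (Aconst ^ s = 16 ^ s * (3 ^ 16) ^ s)%R.
Proof. unfold Aconst. apply Rpow_mult_distr. Qed.

Lemma err_const_bound s :
  (INR (ellT s) * (4 * INR (BT s) * (3 ^ BT s * 3 ^ BT s)) <= Kconst * Aconst ^ s)%R.
Proof.
  unfold ellT, BT. rewrite !mult_INR, !plus_INR, !mult_INR.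
  replace (INR 3) with 3%R by (simpl; ring). replace (INR 4) with 4%R by (simpl; ring).
  replace (INR 6) with 6%R by (simpl; ring). replace (INR 10) with 10%R by (simpl; ring).
  replace (INR 12) with 12%R by (simpl; ring). replace (INR 22) with 22%R by (simpl; ring).
  replace (INR 8) with 8%R by (simpl; ring). replace (INR 15) with 15%R by (simpl; ring).
  set (S := INR s). assert (HS : (0 <= S)%R) by apply pos_INR.
  assert (E3 : (3 ^ (8 * s + 15) * 3 ^ (8 * s + 15) = 3 ^ 30 * (3 ^ 16) ^ s)%R).
  { rewrite <- pow_add. rewrite <- pow_mult. rewrite <- pow_add. f_equal. lia. }
  rewrite E3, Aconst_pow. unfold Kconst.
  pose proof (poly4_bound s) as P4. fold S in P4.
  assert (Hp : ((3 * S + 4) * (6 * S + 10) * (12 * S + 22) * (4 * (8 * S + 15)) <= 52800 * (S + 1) ^ 4)%R).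
  { assert (a1 : (3 * S + 4 <= 4 * (S + 1))%R) by lra.
    assert (a2 : (6 * S + 10 <= 10 * (S + 1))%R) by lra.
    assert (a3 : (12 * S + 22 <= 22 * (S + 1))%R) by lra.
    assert (a4 : (4 * (8 * S + 15) <= 60 * (S + 1))%R) by lra.
    replace (52800 * (S + 1) ^ 4)%R with (4 * (S + 1) * (10 * (S + 1)) * (22 * (S + 1)) * (60 * (S + 1)))%R by ring.
    assert (b12 : ((3 * S + 4) * (6 * S + 10) <= 4 * (S + 1) * (10 * (S + 1)))%R)
      by (apply Rmult_le_compat; lra).
    assert (b123 : ((3 * S + 4) * (6 * S + 10) * (12 * S + 22) <= 4 * (S + 1) * (10 * (S + 1)) * (22 * (S + 1)))%R)
      by (apply Rmult_le_compat; nra).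
    apply Rmult_le_compat; nra. }
  assert (H3 : (0 < 3 ^ 30)%R) by (apply pow_lt; lra).
  assert (H16 : (0 < (3 ^ 16) ^ s)%R) by (apply pow_lt; apply pow_lt; lra).
  replace ((3 * S + 4) * (6 * S + 10) * (12 * S + 22) * (4 * (8 * S + 15) * (3 ^ 30 * (3 ^ 16) ^ s)))%R
    with (((3 * S + 4) * (6 * S + 10) * (12 * S + 22) * (4 * (8 * S + 15))) * (3 ^ 30 * (3 ^ 16) ^ s))%R by ring.
  replace (52800 * 3 ^ 30 * (16 ^ s * (3 ^ 16) ^ s))%R with ((52800 * 16 ^ s) * (3 ^ 30 * (3 ^ 16) ^ s))%R by ring.
  apply Rmult_le_compat_r; [nra|]. nra.
Qed.

Lemma big_bound_ge s : (52800 * 16 ^ s <= Kconst * Aconst ^ s)%R.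
Proof.
  unfold Kconst. rewrite Aconst_pow.
  assert (1 <= 3 ^ 30)%R by (apply pow_R1_Rle; lra).
  assert (1 <= (3 ^ 16) ^ s)%R by (apply pow_R1_Rle, pow_R1_Rle; lra).
  assert (0 < 16 ^ s)%R by (apply pow_lt; lra).
  replace (52800 * 3 ^ 30 * (16 ^ s * (3 ^ 16) ^ s))%R with ((52800 * 16 ^ s) * (3 ^ 30 * (3 ^ 16) ^ s))%R by ring.
  assert (1 <= 3 ^ 30 * (3 ^ 16) ^ s)%R by nra. nra.
Qed.

Lemma P_bound n1 n2 :
  (Rabs (12 * IZR n1 * IZR n2 - 3 * IZR n1 ^ 2 - 3 * IZR n2 ^ 2 - IZR n1 - IZR n2)
   <= Kconst * Aconst ^ (sn n1 n2))%R.
Proof.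
  eapply Rle_trans; [|apply big_bound_ge].
  eapply Rle_trans; [|apply Rmult_le_compat_l; [lra| apply poly4_bound]].
  unfold sn. rewrite plus_INR, !INR_abs_nat.
  set (x := IZR n1). set (y := IZR n2).
  pose proof (Rabs_pos x). pose proof (Rabs_pos y).
  pose proof (Rle_abs x). pose proof (Rle_abs y).
  pose proof (Rle_abs (- x)). pose proof (Rle_abs (- y)). rewrite Rabs_Ropp in *.
  assert (Hxy : (Rabs (x * y) = Rabs x * Rabs y)%R) by apply Rabs_mult.
  pose proof (Rle_abs (x * y)). pose proof (Rle_abs (- (x * y))). rewrite Rabs_Ropp in *.
  assert (x ^ 2 = Rabs x ^ 2)%R by (rewrite pow2_abs; reflexivity).
  assert (y ^ 2 = Rabs y ^ 2)%R by (rewrite pow2_abs; reflexivity).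
  apply Rabs_le. split; nra.
Qed.

Lemma L_bound n1 n2 : (Rabs (Lpoly n1 n2) <= Kconst * Aconst ^ (sn n1 n2))%R.
Proof.
  pose proof (ev_one_bound _ _ _ (Tn_bounded n1 n2)) as H.
  rewrite T_one, Cmod_R in H. eapply Rle_trans; [exact H|].
  eapply Rle_trans; [|apply err_const_bound].
  set (s := sn n1 n2).
  assert (0 <= INR (ellT s))%R by apply pos_INR.
  assert (1 <= INR (BT s))%R by (unfold BT; rewrite plus_INR, mult_INR; simpl; pose proof (pos_INR s); lra).
  assert (1 <= 3 ^ BT s)%R by (apply pow_R1_Rle; lra).
  assert (1 <= 4 * INR (BT s) * (3 ^ BT s * 3 ^ BT s))%R by nra.
  nra.
Qed.

Definition Ef (i j : Z) : R := (2 * Qf (IZR i - / 2) (IZR j - / 2))%R.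
Definition Pp (i j : Z) : R :=
  (12 * IZR i * IZR j - 3 * IZR i ^ 2 - 3 * IZR j ^ 2 - IZR i - IZR j)%R.
Definition Den (x y : C) : C := (1 - / x) * (1 - / y) * (1 - / x * / y).

Lemma F_term_eq tau x y i j : F_term tau x y i j = qpow tau (Ef i j) * (Nnum x y i j / Den x y).
Proof. reflexivity. Qed.

Lemma RHS_term_eq tau i j : RHS_term tau i j = RtoC (Pp i j) * qpow tau (Ef i j).
Proof. reflexivity. Qed.

Lemma sn_pow i j : (Aconst ^ sn i j = Aconst ^ Z.abs_nat i * Aconst ^ Z.abs_nat j)%R.
Proof. unfold sn. apply pow_add. Qed.

Lemma term_bound tau (w : C) i j (M : R) : 0 < Im tau -> 0 <= M ->
  Cmod w <= M * Aconst ^ sn i j ->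
  Cmod (w * qpow tau (Ef i j)) <= M * (vmaj Aconst (2 * PI * Im tau) i * vmaj Aconst (2 * PI * Im tau) j).
Proof.
  intros Ht HM Hw. rewrite Cmod_mult. pose proof (qpow_E_bound tau i j Ht) as Hq. fold (Ef i j) in Hq.
  unfold vmaj. rewrite sn_pow in Hw.
  set (c := (2 * PI * Im tau)%R) in *.
  apply Rle_trans with (M * (Aconst ^ Z.abs_nat i * Aconst ^ Z.abs_nat j) * (uexp c i * uexp c j))%R.
  - apply Rmult_le_compat; auto using Cmod_ge_0.
  - right. ring.
Qed.

Lemma Aconst_ge1 : (1 <= Aconst)%R.
Proof. unfold Aconst. assert (1 <= 3 ^ 16)%R by (apply pow_R1_Rle; lra). lra. Qed.
Lemma Kconst_pos : (0 <= Kconst)%R.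
Proof. unfold Kconst. assert (0 < 3 ^ 30)%R by (apply pow_lt; lra). lra. Qed.

Lemma Lpoly_anti i j :
  (Lpoly (1 - i) (1 - j) + - / 4 * Pp (1 - i) (1 - j) = - (Lpoly i j + - / 4 * Pp i j))%R.
Proof. unfold Lpoly, Pp. rewrite !minus_IZR. generalize (IZR i) (IZR j). intros a b. field. Qed.

Lemma Ef_sym i j : Ef (1 - i) (1 - j) = Ef i j.
Proof. unfold Ef, Qf. rewrite !minus_IZR. field. Qed.

Lemma R_ball (a b e : R) : ball a e b <-> Rabs (b - a) < e.
Proof. split; intros H; exact H. Qed.

Lemma ball_of_Cmod (l w : C) (e : R) : Cmod (w - l) < e -> ball l e w.
Proof.
  intros H. apply ball_C. split; apply R_ball.
  - eapply Rle_lt_trans; [|exact H].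
    replace (Re w - Re l)%R with (Re (w - l)) by (destruct w, l; simpl; ring). apply re_le_Cmod.
  - eapply Rle_lt_trans; [|exact H].
    replace (Im w - Im l)%R with (Im (w - l)) by (destruct w, l; simpl; ring). apply im_le_Cmod.
Qed.

Lemma Cmod_of_ball (l w : C) (e : R) : ball l e w -> Cmod (w - l) < 2 * e.
Proof.
  intros H. apply ball_C in H. destruct H as [H1 H2].
  change (Rabs (Re w - Re l) < e) in H1. change (Rabs (Im w - Im l) < e) in H2.
  eapply Rle_lt_trans; [apply Cmod_le_sum|].
  replace (Re (w - l)) with (Re w - Re l)%R by (destruct w, l; simpl; ring).
  replace (Im (w - l)) with (Im w - Im l)%R by (destruct w, l; simpl; ring). lra.
Qed.

Theorem proposition6p1 (tau : C) (Htau : 0 < Im tau) :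
  is_zsum2 (RHS_term tau) (zsum2 (RHS_term tau)) /\
  filterlim (fun z : C * C => F tau (fst z) (snd z))
    (within F_dom (locally (RtoC 1, RtoC 1)))
    (locally (/ 4 * zsum2 (RHS_term tau))).
Proof.
  set (c := (2 * PI * Im tau)%R).
  assert (Hc : (0 < c)%R) by (unfold c; pose proof PI_RGT_0; apply Rmult_lt_0_compat; lra).
  set (v := vmaj Aconst c). set (Tb := (3 * C0 Aconst c)%R). set (K := Kconst).
  assert (Hv : forall i, (0 <= v i)%R) by (intros; apply vmaj_nonneg, Aconst_ge1).
  assert (HT : forall N, (zR v N <= Tb)%R) by (intros; apply vmaj_sum; [apply Aconst_ge1| auto]).
  assert (HK : (0 <= K)%R) by apply Kconst_pos.
  assert (HR : forall i j, (Cmod (RHS_term tau i j) <= K * (v i * v j))%R).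
  { intros i j. rewrite RHS_term_eq. apply term_bound; auto. rewrite Cmod_R. apply P_bound. }
  destruct (maj_conv _ v K Tb Hv HK HT HR) as [HRs _].
  set (Lt := fun i j => RtoC (Lpoly i j) * qpow tau (Ef i j)).
  assert (HL : forall i j, (Cmod (Lt i j) <= K * (v i * v j))%R).
  { intros i j. unfold Lt. apply term_bound; auto. rewrite Cmod_R. apply L_bound. }
  destruct (maj_conv _ v K Tb Hv HK HT HL) as [HLs _].
  set (Lam := zsum2 Lt). set (Rr := zsum2 (RHS_term tau)).
  set (g := fun i j => RtoC (Lpoly i j + - / 4 * Pp i j)%R * qpow tau (Ef i j)).
  assert (Hg0 : is_zsum2 g 0).
  { apply (antisym_zero g v (2 * K) Tb); auto; [lra| |].
    - intros i j. unfold g. apply term_bound; auto; [lra|]. rewrite Cmod_R.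
      pose proof (L_bound i j). pose proof (P_bound i j). fold (Pp i j) in H0.
      eapply Rle_trans; [apply Rabs_triang|]. rewrite Rabs_mult.
      replace (Rabs (- / 4)) with (/ 4)%R by (rewrite Rabs_left; lra).
      assert (0 <= K * Aconst ^ sn i j)%R.
      { apply Rmult_le_pos; auto. apply pow_le. pose proof Aconst_ge1; lra. }
      fold K in H, H0. lra.
    - intros i j. unfold g. rewrite Lpoly_anti, Ef_sym, RtoC_opp. ring. }
  assert (Hg1 : is_zsum2 g (Lam + RtoC (- / 4) * Rr)).
  { eapply is_zsum2_ext; [| apply (is_zsum2_lin _ _ _ _ (RtoC (- / 4)) HLs HRs)].
    intros i j. unfold g, Lt. rewrite RHS_term_eq. rewrite RtoC_plus, !RtoC_mult. ring. }
  assert (HLam : / 4 * Rr = Lam).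
  { apply zsum2_eq in Hg0. apply zsum2_eq in Hg1. rewrite Hg0 in Hg1. fold Rr.
    rewrite RtoC_opp, RtoC_inv in Hg1 by lra.
    replace Lam with (Lam + - (/ 4) * Rr + / 4 * Rr) by ring. rewrite <- Hg1. ring. }
  split; [exact HRs|].
  rewrite HLam.
  apply (filterlim_locally (F := within F_dom (locally (RtoC 1, RtoC 1)))).
  intros eps.
  set (Kb := (2 * (K * Tb ^ 2))%R).
  assert (HTb : (0 <= Tb)%R) by (eapply Rle_trans; [apply (zR_nonneg v 0); auto| apply HT]).
  assert (HKb : (0 <= Kb)%R) by (unfold Kb; apply Rmult_le_pos; [lra| apply Rmult_le_pos; nra]).
  set (d0 := Rmin (/ 4) (eps / (2 * (Kb + 1)))).
  assert (Hd0 : (0 < d0)%R).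
  { unfold d0. apply Rmin_glb_lt; [lra|]. apply Rdiv_lt_0_compat; [apply cond_pos| lra]. }
  exists (mkposreal d0 Hd0). intros [x y] Hb Hdom. simpl fst; simpl snd. change C in x, y.
  destruct Hb as [Hbx Hby].
  apply Cmod_of_ball in Hbx. apply Cmod_of_ball in Hby. cbn [fst snd pos] in Hbx, Hby.
  set (d := (2 * d0)%R).
  assert (Hdd : (d <= / 2)%R) by (unfold d, d0; pose proof (Rmin_l (/ 4) (eps / (2 * (Kb + 1)))); lra).
  assert (Hdx : (Cmod (x - 1) <= d)%R) by (unfold d; lra).
  assert (Hdy : (Cmod (y - 1) <= d)%R) by (unfold d; lra).
  destruct Hdom as [Hx0 [Hy0 [Hx1 [Hy1 Hxy1]]]]. simpl in Hx0, Hy0, Hx1, Hy1, Hxy1.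
  set (h := fun i j => qpow tau (Ef i j) * (ev (Tn i j) x y - ev (Tn i j) 1 1)).
  assert (Hd0' : (0 <= d)%R) by (unfold d; lra).
  assert (Hh : forall i j, (Cmod (h i j) <= (d * K) * (v i * v j))%R).
  { intros i j. unfold h. rewrite Cmult_comm. apply term_bound; auto; [apply Rmult_le_pos; auto|].
    eapply Rle_trans; [apply (ev_diff_bound _ _ _ x y d (Tn_bounded i j)); auto|].
    pose proof (err_const_bound (sn i j)). unfold K.
    replace (INR (ellT (sn i j)) * (4 * INR (BT (sn i j)) * d * (3 ^ BT (sn i j) * 3 ^ BT (sn i j))))%R
      with (d * (INR (ellT (sn i j)) * (4 * INR (BT (sn i j)) * (3 ^ BT (sn i j) * 3 ^ BT (sn i j)))))%R by ring.
    replace (d * Kconst * Aconst ^ sn i j)%R with (d * (Kconst * Aconst ^ sn i j))%R by ring.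
    apply Rmult_le_compat_l; auto. }
  destruct (maj_conv h v (d * K) Tb Hv ltac:(apply Rmult_le_pos; auto) HT Hh) as [Hhs Hhb].
  pose proof (is_zsum2_bound _ _ _ Hhs Hhb) as Hhz.
  assert (HF : is_zsum2 (F_term tau x y) (zsum2 h + 1 * Lam)).
  { eapply is_zsum2_ext; [| apply (is_zsum2_lin _ _ _ _ 1 Hhs HLs)].
    intros i j. unfold h, Lt. rewrite F_term_eq.
    assert (HD : Den x y <> 0).
    { unfold Den. apply Cmult_nz; [apply Cmult_nz|]; try (apply one_minus_inv_nz; auto).
      replace (/ x * / y) with (/ (x * y)) by (field; auto).
      apply one_minus_inv_nz; auto. apply Cmult_nz; auto. }
    rewrite T_one.
    replace (Nnum x y i j / Den x y) with (ev (Tn i j) x y).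
    - ring.
    - rewrite <- (T_ident x y i j); auto. unfold Den.
      assert (E1 : x - 1 <> 0) by (intro H; apply Hx1; rewrite <- (Cplus_0_l 1), <- H; ring).
      assert (E2 : y - 1 <> 0) by (intro H; apply Hy1; rewrite <- (Cplus_0_l 1), <- H; ring).
      assert (E3 : x * y - 1 <> 0) by (intro H; apply Hxy1; rewrite <- (Cplus_0_l 1), <- H; ring).
      field. repeat split; auto. }
  unfold F. rewrite (zsum2_eq _ _ HF). apply ball_of_Cmod.
  replace (zsum2 h + 1 * Lam - Lam) with (zsum2 h) by ring.
  eapply Rle_lt_trans; [exact Hhz|].
  assert (Hd2 : (d <= eps / (Kb + 1))%R).
  { unfold d, d0. pose proof (Rmin_r (/ 4) (eps / (2 * (Kb + 1)))).
    replace (eps / (Kb + 1))%R with (2 * (eps / (2 * (Kb + 1))))%R by (field; lra). lra. }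
  assert (Heps : (0 < eps)%R) by apply cond_pos.
  replace (2 * (d * K * Tb ^ 2))%R with (d * Kb)%R by (unfold Kb; ring).
  apply Rle_lt_trans with (eps / (Kb + 1) * Kb)%R.
  - apply Rmult_le_compat_r; auto.
  - apply (Rmult_lt_reg_r (Kb + 1)); [lra|].
    replace (eps / (Kb + 1) * Kb * (Kb + 1))%R with (eps * Kb)%R by (field; lra). nra.
Qed.
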